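(* For every prime $p$, as $v\to\infty$, $g_p'(v)\ge(1+o(1))v^2/49$; consequently, as $t\to\infty$, $g_p(t)\le(7+o(1))\sqrt{t}$.
   Context: For a prime $p$, the addition table of $\mathbb{Z}_p^m$ is the set of triples (faces) $(a,b,a+b)$, $a,b\in\mathbb{Z}_p^m$, viewed as a tripartite 3-uniform hypergraph whose vertices are rows, columns and labels (three disjoint copies of $\mathbb{Z}_p^m$). A set of vertices spans a face if all three vertices of the face are in the set. $g_p'(v)$ is the maximal number of faces that can be spanned by a set of $v$ vertices in the addition table of $\mathbb{Z}_p^m$, for any $m$ sufficiently large in terms of $v$ and $p$. An $(r,s)$-configuration is a collection of $s$ faces involving at most $r$ vertices in total. $g_p(t)$ is the least integer $r$ such that the addition table of $\mathbb{Z}_p^m$ contains an $(r,t)$-configuration for all $m$ sufficiently large in terms of $t$ and $p$. *)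

(* Defs.v *)
From HB Require Import structures.
From mathcomp Require Import all_boot all_order all_algebra.
From mathcomp Require Import reals.
Set Implicit Arguments. Unset Strict Implicit. Unset Printing Implicit Defensive.
Import Order.TTheory GRing.Theory Num.Theory.
Local Open Scope ring_scope.

Definition grp (p m : nat) : finType := 'rV['F_p]_m.

(* Vertices of the addition table: rows, columns, labels, three disjoint
   copies of Z_p^m. *)
Definition vert (p m : nat) : finType := ((grp p m + grp p m) + grp p m)%type.
Definition rowv p m (a : grp p m) : vert p m := inl (inl a).
Definition colv p m (b : grp p m) : vert p m := inl (inr b).
Definition labv p m (c : grp p m) : vert p m := inr c.

Definition face_verts p m (f : grp p m * grp p m) : {set vert p m} :=
  [set rowv f.1; colv f.2; labv (f.1 + f.2)].

Definition spanned p m (S : {set vert p m}) : nat :=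
  #|[set f : grp p m * grp p m | face_verts f \subset S]|.

Definition maxspan p m (v : nat) : nat :=
  (\max_(S : {set vert p m} | #|S| == v) spanned S)%N.

(* g = g_p'(v): maxspan p m v equals g for all m sufficiently large. *)
Definition is_gp' (p v g : nat) : Prop :=
  exists M : nat, forall m : nat, (M <= m)%N -> maxspan p m v = g.

(* An (r,s)-configuration in the addition table of Z_p^m: a collection of
   s faces involving at most r vertices in total. *)
Definition has_config (p m r s : nat) : Prop :=
  exists F : {set grp p m * grp p m},
    #|F| = s /\ (#|\bigcup_(f in F) face_verts f| <= r)%N.

Definition eventually_config (p r t : nat) : Prop :=
  exists M : nat, forall m : nat, (M <= m)%N -> has_config p m r t.

Definition is_gp (p t r : nat) : Prop :=
  eventually_config p r t /\
  forall r' : nat, eventually_config p r' t -> (r <= r')%N.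

(* Main.v *)
Require Import Defs.
From HB Require Import structures.
From mathcomp Require Import all_boot all_order all_algebra.
From mathcomp Require Import reals.
From mathcomp Require Import zify.
From Stdlib Require Import Classical.
Import Order.TTheory GRing.Theory Num.Theory.
Local Open Scope ring_scope.
Set Implicit Arguments. Unset Strict Implicit. Unset Printing Implicit Defensive.

Lemma face_subE p m (f : grp p m * grp p m) (S : {set vert p m}) :
  (face_verts f \subset S) =
  [&& rowv f.1 \in S, colv f.2 \in S & labv (f.1 + f.2) \in S].
Proof.
apply/subsetP/and3P => [H|[h1 h2 h3] x].
  by split; apply: H; rewrite !inE eqxx ?orbT.
rewrite /face_verts !inE.
by case/orP => [/orP[]|] /eqP->.
Qed.

Lemma pad_set (T : finType) (S0 X : {set T}) (v : nat) :
  S0 \subset X -> (#|S0| <= v <= #|X|)%N ->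
  exists S : {set T}, [/\ S0 \subset S, S \subset X & #|S| = v].
Proof.
move=> sub /andP[h1 h2].
have [n hn] : exists n, v = (#|S0| + n)%N by exists (v - #|S0|)%N; lia.
elim: n S0 sub h1 h2 hn => [|n IH] S0 sub h1 h2 hn.
  by exists S0; split => //; lia.
have lt : (#|S0| < #|X|)%N by lia.
have [x /setDP[xX xS0]] : exists x, x \in X :\: S0.
  apply/set0Pn; apply/negP => /eqP e.
  have : X \subset S0 by rewrite -setD_eq0 e.
  by move/subset_leq_card; lia.
have e1 : x |: S0 \subset X by rewrite subUset sub1set xX sub.
have e2 : (#|x |: S0| <= v)%N by rewrite cardsU1 xS0; lia.
have e3 : v = (#|x |: S0| + n)%N by rewrite cardsU1 xS0; lia.
have [S [s1 s2 s3]] := IH (x |: S0) e1 e2 h2 e3.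
exists S; split => //.
by apply: subset_trans s1; apply: subsetUr.
Qed.

Lemma card_vert p m : prime p -> #|{: vert p m}| = (3 * p ^ m)%N.
Proof.
move=> hp; rewrite /vert !card_sum /grp card_mx card_Fp // mul1n; lia.
Qed.

Lemma pre_card (T U : finType) (f : T -> U) (S : {set U}) :
  injective f -> (#|f @^-1: S| <= #|S|)%N.
Proof.
move=> inj; rewrite -(card_imset _ inj); apply: subset_leq_card.
by apply/subsetP => y /imsetP[x]; rewrite inE => h ->.
Qed.

Lemma spanned_le p m (S : {set vert p m}) : (spanned S <= #|S| * #|S|)%N.
Proof.
rewrite /spanned.
apply: (leq_trans (n := #|setX (@rowv p m @^-1: S) (@colv p m @^-1: S)|)).
  apply: subset_leq_card; apply/subsetP => f; rewrite !inE face_subE.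
  by case/and3P => -> ->.
rewrite cardsX; apply: leq_mul; apply: pre_card; by move=> a b [].
Qed.

Definition emb p m m' (x : grp p m) : grp p m' :=
  \row_(j < m') \sum_(i < m | (i : nat) == j) x 0 i.

Lemma embD p m m' (a b : grp p m) : emb m' (a + b) = emb m' a + emb m' b.
Proof.
apply/rowP => j; rewrite !mxE -big_split; apply: eq_bigr => i _.
by rewrite mxE.
Qed.

Lemma emb_inj p m m' : (m <= m')%N -> injective (@emb p m m').
Proof.
move=> le a b e; apply/(@matrixP _ 1 m) => i0 i; rewrite [i0]ord1.
have h x : (emb m' x) 0 (widen_ord le i) = x 0 i.
  rewrite mxE (big_pred1 i) // => k /=; exact: val_eqE.
by rewrite -h e h.
Qed.

Definition embv p m m' (x : vert p m) : vert p m' :=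
  match x with
  | inl (inl a) => rowv (emb m' a)
  | inl (inr b) => colv (emb m' b)
  | inr c => labv (emb m' c)
  end.

Lemma embv_inj p m m' : (m <= m')%N -> injective (@embv p m m').
Proof.
move=> le; have inj := @emb_inj p _ _ le.
by move=> [[a|a]|a] [[b|b]|b] //= [] /inj ->.
Qed.

Lemma maxspan_mono p m m' v : (m <= m')%N -> (maxspan p m v <= maxspan p m' v)%N.
Proof.
move=> le; apply/bigmax_leqP => S /eqP hS.
have injv := @embv_inj p _ _ le; have inj := @emb_inj p _ _ le.
apply: leq_trans (leq_bigmax_cond (embv m' @: S) _); last first.
  by rewrite card_imset // hS.
rewrite /spanned.
have injf : injective (fun f : grp p m * grp p m => (emb m' f.1, emb m' f.2)).
  by move=> [a b] [c d] /= [] /inj -> /inj ->.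
rewrite -(card_imset _ injf); apply: subset_leq_card.
apply/subsetP => g /imsetP[f]; rewrite inE face_subE => /and3P[h1 h2 h3] ->.
rewrite inE face_subE /=; apply/and3P; split.
- by apply/imsetP; exists (rowv f.1).
- by apply/imsetP; exists (colv f.2).
- by apply/imsetP; exists (labv (f.1 + f.2)); rewrite //= embD.
Qed.

Lemma stabilize (f : nat -> nat) (B : nat) :
  (forall m m', (m <= m')%N -> (f m <= f m')%N) -> (forall m, (f m <= B)%N) ->
  exists M, forall m, (M <= m)%N -> f m = f M.
Proof.
move=> mono bnd.
have [k hk] : exists k, (B - f 0 <= k)%N by eexists.
elim: k f mono bnd hk => [|k IH] f mono bnd hk.
  exists 0%N => m _; have := mono 0%N m isT; have := bnd m; lia.
destruct (classic (exists m, f m <> f 0%N)) as [[m0 hm0]|H].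
  have e1 : forall a b, (a <= b)%N -> (f (m0 + a) <= f (m0 + b))%N.
    by move=> a b ab; apply: mono; lia.
  have e2 : forall n, (f (m0 + n) <= B)%N by [].
  have e3 : (B - f (m0 + 0) <= k)%N.
    have := mono 0%N m0 isT; have := bnd m0; rewrite addn0.
    move: hm0 => /eqP; lia.
  have [M HM] := IH (fun n => f (m0 + n)%N) e1 e2 e3.
  exists (m0 + M)%N => m le.
  have h1 : (M <= m - m0)%N by lia.
  have := HM (m - m0)%N h1; rewrite subnKC //; lia.
exists 0%N => m _; apply: NNPP => ne; apply: H; by exists m.
Qed.

Lemma gp'_exists p v : exists g, is_gp' p v g.
Proof.
have bnd m : (maxspan p m v <= v * v)%N.
  by apply/bigmax_leqP => S /eqP hS; rewrite -hS; apply: spanned_le.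
have [M HM] := stabilize (fun m m2 le => @maxspan_mono p m m2 v le) bnd.
by exists (maxspan p M v), M.
Qed.

Definition psi p m k c (x : 'I_c * 'rV['F_p]_k) : grp p m :=
  \row_(j < m) (if (j < k)%N then \sum_(l < k | (l : nat) == j) x.2 0 l
                else if (j : nat) == k then ((x.1 : nat)%:R : 'F_p) else 0).

Definition Cset p m k c : {set grp p m} := (@psi p m k c) @: [set: 'I_c * 'rV['F_p]_k].

Lemma Cset_le p m k c : prime p -> (#|Cset p m k c| <= c * p ^ k)%N.
Proof.
move=> hp; apply: leq_trans (leq_imset_card _ _) _.
by rewrite cardsT card_prod card_ord card_mx card_Fp // mul1n.
Qed.

Lemma Cset_card p m k c : prime p -> (k < m)%N -> (c <= p)%N ->
  #|Cset p m k c| = (c * p ^ k)%N.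
Proof.
move=> hp km cp; rewrite /Cset card_imset; last first.
  move=> [i y] [i' y'] e.
  have ey : y = y'.
    apply/(@matrixP _ 1 k) => i0 l; rewrite [i0]ord1.
    have := congr1 (fun z : grp p m => z 0 (widen_ord (ltnW km) l)) e.
    rewrite /= !mxE /= ltn_ord.
    rewrite (big_pred1 l) ?(big_pred1 l) // => q /=; exact: val_eqE.
  have ei : i = i'.
    have := congr1 (fun z : grp p m => z 0 (Ordinal km)) e.
    rewrite /= !mxE /= ltnn eqxx => /(congr1 (@nat_of_ord _)).
    rewrite !val_Fp_nat // !modn_small => [/val_inj //||]; 
      apply: leq_trans cp; exact: ltn_ord.
  by rewrite ei ey.
by rewrite cardsT card_prod card_ord card_mx card_Fp // mul1n.
Qed.

Lemma Cset_add p m k s a b : (0 < s)%N ->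
  a \in Cset p m k s -> b \in Cset p m k s -> a + b \in Cset p m k (s + s).-1.
Proof.
move=> s0 /imsetP[[i y] _ ->] /imsetP[[i' y'] _ ->].
have lt : (i + i' < (s + s).-1)%N by have := ltn_ord i; have := ltn_ord i'; lia.
apply/imsetP; exists (Ordinal lt, y + y') => //.
apply/(@matrixP _ 1 m) => i0 j; rewrite [i0]ord1 !mxE /=.
case: ifP => _.
  by rewrite -big_split; apply: eq_bigr => l _; rewrite mxE.
by case: ifP => _; rewrite ?natrD ?addr0.
Qed.

Lemma choose_ks p v : prime p -> (3 <= v)%N -> exists k s,
  [/\ (0 < s)%N, (s + s <= p + 1)%N, ((4 * s - 1) * p ^ k <= v)%N
    & (v * v <= (7 * s * p ^ k) * (7 * s * p ^ k))%N].
Proof.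
move=> hp v3; have p1 := prime_gt1 hp.
have v30 : (0 < v %/ 3)%N by rewrite divn_gt0 //.
have := trunc_log_bounds p1 v30.
set k := trunc_log p (v %/ 3); set P := (p ^ k)%N => /andP[b1 b2].
have P0 : (0 < P)%N by rewrite expn_gt0; lia.
have hP3 : (3 * P <= v)%N by rewrite mulnC -leq_divRL.
have hv : (v < 3 * p * P)%N.
  have := ltn_ceil v (isT : (0 < 3)%N); rewrite expnS in b2.
  move: b2; rewrite -/P; move: (v %/ 3)%N => w; nia.
set q := (v %/ P)%N.
have q3 : (3 <= q)%N by rewrite leq_divRL.
have q3p : (q < 3 * p)%N by rewrite ltn_divLR.
have [s es] : exists s, s = minn ((q + 1) %/ 4) ((p + 1) %/ 2) by eexists.
have [s1 s2 s3 s4] : [/\ (0 < s)%N, (s + s <= p + 1)%N, (4 * s - 1 <= q)%N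
                      & (q + 1 <= 7 * s)%N].
  split; lia.
exists k, s; split => //.
  apply: leq_trans (leq_trunc_div v P); by rewrite leq_mul2r s3 orbT.
have h : (v < 7 * s * P)%N.
  apply: leq_trans (ltn_ceil v P0) _; by rewrite leq_mul2r -addn1 s4 orbT.
by apply: leq_mul; apply: ltnW.
Qed.

Lemma construct p v : prime p -> (3 <= v)%N -> exists k, forall m, (k < m)%N ->
  exists A C : {set grp p m},
    [/\ (#|A| + #|A| + #|C| <= v)%N, (v * v <= 49 * (#|A| * #|A|))%N
      & forall a b, a \in A -> b \in A -> a + b \in C].
Proof.
move=> hp v3; have [k [s [s0 s1 s2 s3]]] := choose_ks hp v3.
exists k => m km; exists (Cset p m k s), (Cset p m k (s + s).-1); split.
- have c1 : (s <= p)%N by lia.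
  have c2 : ((s + s).-1 <= p)%N by lia.
  rewrite (@Cset_card p m k s hp km c1) (@Cset_card p m k _ hp km c2).
  have e : (s + s).-1 = (4 * s - 1 - s - s)%N by lia.
  rewrite e -!mulnDl; apply: leq_trans s2; rewrite leq_mul2r; lia.
- have c1 : (s <= p)%N by lia.
  rewrite (@Cset_card p m k s hp km c1).
  move: s3; move: (p ^ k)%N => P; nia.
- by move=> a b; apply: Cset_add.
Qed.

Definition S0 p m (A C : {set grp p m}) : {set vert p m} :=
  (@rowv p m) @: A :|: (@colv p m) @: A :|: (@labv p m) @: C.

Lemma S0_card p m (A C : {set grp p m}) : (#|S0 A C| <= #|A| + #|A| + #|C|)%N.
Proof.
rewrite /S0; apply: leq_trans (leq_card_setU _ _) _.
apply: leq_add; last exact: leq_imset_card.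
apply: leq_trans (leq_card_setU _ _) _.
by apply: leq_add; apply: leq_imset_card.
Qed.

Lemma S0_face p m (A C : {set grp p m}) a b :
  (forall a b, a \in A -> b \in A -> a + b \in C) ->
  a \in A -> b \in A -> face_verts (a, b) \subset S0 A C.
Proof.
move=> cl aA bA; rewrite face_subE /= /S0 !inE.
by rewrite (imset_f _ aA) (imset_f _ bA) (imset_f _ (cl _ _ aA bA)) !orbT.
Qed.

Lemma least (P : nat -> Prop) n : P n -> exists r, P r /\ forall r', P r' -> (r <= r')%N.
Proof.
elim: n {-2}n (leqnn n) => [|n IH] n0 le Pn0.
  exists n0; split => // r' _; lia.
destruct (classic (exists r', P r' /\ (r' < n0)%N)) as [[r' [h1 h2]]|H].
  apply: (IH r') => //; lia.
exists n0; split => // r' Pr'; rewrite leqNgt; apply/negP => lt.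
by apply: H; exists r'.
Qed.

Lemma part1 p v : prime p -> (3 <= v)%N ->
  exists g, is_gp' p v g /\ (v * v <= 49 * g)%N.
Proof.
move=> hp v3; have [g [M HM]] := gp'_exists p v.
have [k Hk] := construct hp v3.
pose m := maxn M (maxn k.+1 v).
have [A [C [h1 h2 h3]]] := Hk m ltac:(lia).
have vm : (v <= #|[set: vert p m]|)%N.
  rewrite cardsT card_vert //.
  have := ltn_expl m (prime_gt1 hp); lia.
have [S [sS _ cS]] := @pad_set _ (S0 A C) [set: vert p m] v (subsetT _)
  ltac:(have := S0_card A C; lia).
exists g; split; first by exists M.
rewrite -(HM m ltac:(lia)).
apply: leq_trans h2 _; rewrite leq_mul2l; apply/orP; right.
rewrite /maxspan; apply: (@leq_trans (spanned S)); last by apply: (leq_bigmax_cond S); rewrite cS.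
rewrite -cardsX /spanned; apply: subset_leq_card; apply/subsetP => -[a b].
rewrite !inE => /andP[aA bA]; apply: subset_trans sS.
exact: S0_face.
Qed.

Lemma part2 p t : prime p -> (1 <= t)%N -> exists r v,
  [/\ is_gp p t r, (r <= v)%N, (1 <= v)%N & ((v - 1) * (v - 1) < 49 * t)%N].
Proof.
move=> hp t1.
have ex : exists v, (49 * t <= v * v)%N by exists (7 * t)%N; nia.
case: (ex_minnP ex) => v hv hmin.
have v7 : (7 <= v)%N by nia.
have hv1 : ((v - 1) * (v - 1) < 49 * t)%N.
  rewrite ltnNge; apply/negP => h; have := hmin _ h; lia.
have ev : eventually_config p v t.
  have [k Hk] := construct hp (ltac:(lia) : (3 <= v)%N).
  exists k.+1 => m km; have [A [C [h1 h2 h3]]] := Hk m km.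
  have [F [_ FA cF]] := @pad_set _ set0 (setX A A) t (sub0set _)
    ltac:(rewrite cards0 cardsX; lia).
  exists F; split => //.
  apply: leq_trans h1; apply: leq_trans (S0_card A C); apply: subset_leq_card.
  apply/bigcupsP => -[a b] /(subsetP FA); rewrite inE => /andP[aA bA].
  exact: S0_face.
have [r [Pr rmin]] := @least (fun r => eventually_config p r t) v ev.
exists r, v; split => //; last lia.
by apply: rmin.
Qed.

From mathcomp Require Import lra.
Unset Implicit Arguments.

Theorem proposition2 (R : realType) (p : nat) (hp : prime p) :
  (forall eps : R, 0 < eps ->
     exists V : nat, forall v : nat, (V <= v)%N ->
       exists g : nat, is_gp' p v g /\
         (1 - eps) * (v%:R ^+ 2 / 49%:R) <= g%:R)
  /\
  (forall eps : R, 0 < eps ->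
     exists T : nat, forall t : nat, (T <= t)%N ->
       exists r : nat, is_gp p t r /\
         r%:R <= (7%:R + eps) * Num.sqrt (t%:R)).
Proof.
split.
- move=> eps eps0; exists 3%N => v v3.
  have [g [hg hvg]] := part1 hp v3.
  exists g; split => //.
  have hx : (v%:R ^+ 2 / 49%:R : R) <= g%:R.
    by rewrite ler_pdivrMr ?ltr0n // mulrC expr2 -!natrM ler_nat.
  have x0 : (0 : R) <= v%:R ^+ 2 / 49%:R by rewrite divr_ge0 // ?exprn_ge0.
  move: hx x0; set x := _ / _; nra.
- move=> eps eps0.
  have hn := archi_boundP (ltW (ltac:(by rewrite invr_gt0) : 0 < eps^-1)).
  set n := Num.Def.archi_bound _ in hn.
  exists (maxn 1 (n * n)) => t tT.
  have [r [v [hr rv v1 hv]]] := part2 hp (ltac:(lia) : (1 <= t)%N).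
  exists r; split => //.
  have s0 : (0 : R) <= Num.sqrt t%:R by apply: sqrtr_ge0.
  have ss : Num.sqrt t%:R * Num.sqrt t%:R = t%:R :> R.
    by rewrite -expr2 sqr_sqrtr ?ler0n.
  move: s0 ss; set s := Num.sqrt _ => s0 ss.
  have hvR : ((v%:R - 1) * (v%:R - 1) : R) < 49%:R * t%:R.
    by rewrite -natrM -(natrB _ v1) -natrM ltr_nat.
  have rvR : (r%:R : R) <= v%:R by rewrite ler_nat.
  have en : 1 < eps * n%:R.
    by rewrite -(ltr_pM2l eps0) mulfV ?gt_eqF // in hn.
  have ntR : (n%:R * n%:R : R) <= t%:R.
    by rewrite -natrM ler_nat; lia.
  have n0 : (0 : R) <= n%:R by apply: ler0n.
  have st1 : 1 < (eps * n%:R) ^+ 2 by nra.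
  have st2 : (eps * n%:R) ^+ 2 <= (eps * s) ^+ 2.
    rewrite !exprMn expr2 [s ^+ 2]expr2 ss; apply: ler_wpM2l.
      by rewrite mulr_ge0 // ltW.
    by rewrite expr2.
  have st3 : 1 <= eps * s.
    have es0 : 0 <= eps * s by rewrite mulr_ge0 // ltW.
    move: es0 st1 st2; rewrite !expr2; set y := eps * s; set z := eps * n%:R.
    nra.
  have st4 : (v%:R : R) <= 7%:R * s + 1 by nra.
  nra.
Qed.
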